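(* Let $\psi$ be a CNF formula whose variables include annotated copies $x^{\tau}$ of existential variables $x$ (where $\tau$ is a partial assignment to universal variables to the left of $x$), and let $C$ be a clause of $\psi$ consisting of annotated existential literals. Let $\sigma$ be a partial assignment to universal variables and let $C' = inst(\sigma, C)$ be the clause obtained by the \textsf{IR-calc} instantiation step. Suppose that $\psi$ contains both definition clauses $(\overline{x^{\tau}} \lor x)$ and $(x^{\tau} \lor \overline{x})$ for every annotated variable $x^{\tau}$ occurring in $C$ or in $C'$ (definition clauses for annotated variables of $C'$ not yet present being added first). Then $C'$ is an asymmetric tautology with respect to $\psi$; in particular $C'$ is a \textsf{QRAT} clause and can be added in a \textsf{QRAT} proof, i.e. the instantiation step can be simulated in \textsf{QRAT}.
   Context: Quantified Boolean formulas (QBFs) are in closed prenex form $Q_1X_1\dots Q_kX_k.\psi$ with $\psi$ a CNF; a variable in $X_i$ has level $i$, and $\ell \le_Q k$ means the level of $\ell$ is at most that of $k$. In expansion-based calculi, an existential variable $x$ may be annotated by a partial assignment $\tau$ to universal variables left of $x$, giving a new variable $x^{\tau}$. The \textsf{IR-calc} instantiation rule: for a partial assignment $\sigma$ to universal variables, $inst(\sigma, C) = \{ x^{\tau[\sigma]} : x^{\tau} \in C\}$ (literals keep their polarity), where for each universal $\ell$ left of $x$, $\tau[\sigma](\ell) = \tau(\ell)$ if $\ell \in dom(\tau)$, else $\sigma(\ell)$ if $\ell \in dom(\sigma)$. The definition clauses of an annotated variable $x^{\tau}$ are $(\overline{x^{\tau}} \lor x)$ and $(x^{\tau} \lor \overline{x})$,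 with $x^{\tau}$ placed in the same quantifier block as $x$. A clause $C$ is an asymmetric tautology (AT) w.r.t. a CNF $\psi$ iff unit propagation on $\psi \cup \{(\overline{l}) : l \in C\}$ derives the empty clause, where unit propagation repeatedly, for a unit clause $(\ell)$, removes all clauses containing $\ell$ and removes $\overline{\ell}$ from all clauses. A clause $C \lor \ell$ is a \textsf{QRAT} clause w.r.t. $Q.\psi$ on $\ell$ if for every $D \lor \overline{\ell} \in \psi$ the outer resolvent $C \cup \{k \in D : k \le_Q \ell\}$ is AT w.r.t. $\psi$; every AT clause is a \textsf{QRAT} clause on any literal, and \textsf{QRAT} permits adding such clauses. *)

(* Defs.v *)
From mathcomp Require Import all_boot.
Set Implicit Arguments. Unset Strict Implicit. Unset Printing Implicit Defensive.

(* Universal variables are 'I_nu; existential variables are named by nat.   *)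
(* An annotation is a partial assignment to the universal variables.        *)
Definition annot (nu : nat) := {ffun 'I_nu -> option bool}.

(* A variable is either a universal u (inl u), a plain existential x        *)
(* (inr (x, None)) or an annotated existential x^tau (inr (x, Some tau)).   *)
Definition var (nu : nat) := ('I_nu + (nat * option (annot nu)))%type.

(* A literal: (polarity, variable); polarity true = positive.               *)
Definition lit (nu : nat) := (bool * var nu)%type.
Definition clause (nu : nat) := seq (lit nu).
Definition cnf (nu : nat) := seq (clause nu).

Definition neg_lit nu (l : lit nu) : lit nu := (~~ l.1, l.2).

Definition evar nu (x : nat) : var nu := inr (x, None).
Definition avar nu (x : nat) (tau : annot nu) : var nu := inr (x, Some tau).

(* Quantifier prefix: ulev u = level of universal u, elev x = level of the  *)
(* existential x; an annotated x^tau lives in the same block as x.          *)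
Definition var_level nu (ulev : 'I_nu -> nat) (elev : nat -> nat) (v : var nu)
  : nat :=
  match v with inl u => ulev u | inr (x, _) => elev x end.
Definition lit_level nu ulev elev (l : lit nu) := @var_level nu ulev elev l.2.

Definition annot_wf nu (ulev : 'I_nu -> nat) (elev : nat -> nat) (x : nat)
  (tau : annot nu) : Prop :=
  forall u, tau u != None -> ulev u < elev x.

Definition annotated_lit nu ulev elev (l : lit nu) : Prop :=
  exists x tau, l.2 = @avar nu x tau /\ @annot_wf nu ulev elev x tau.

Definition annot_inst nu (ulev : 'I_nu -> nat) (elev : nat -> nat) (x : nat)
  (sigma tau : annot nu) : annot nu :=
  [ffun u => if ulev u < elev x then
               (if tau u is Some b then Some b else sigma u)
             else None].

Definition inst_var nu ulev elev (sigma : annot nu) (v : var nu) : var nu :=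
  match v with
  | inr (x, Some tau) => @avar nu x (@annot_inst nu ulev elev x sigma tau)
  | _ => v
  end.

Definition inst nu ulev elev (sigma : annot nu) (C : clause nu) : clause nu :=
  [seq (l.1, @inst_var nu ulev elev sigma l.2) | l <- C].

Definition has_def_clauses nu (psi : cnf nu) (x : nat) (tau : annot nu) : Prop :=
  [:: (false, @avar nu x tau); (true, @evar nu x)] \in psi /\
  [:: (true, @avar nu x tau); (false, @evar nu x)] \in psi.

Definition up_step nu (l : lit nu) (F : cnf nu) : cnf nu :=
  [seq [seq k <- c | k != neg_lit l] | c <- F & l \notin c].

Definition is_unit nu (c : clause nu) (l : lit nu) : bool := undup c == [:: l].

Inductive up_refutes nu : cnf nu -> Prop :=
| UPEmpty F : [::] \in F -> up_refutes F
| UPStep F c l : c \in F -> is_unit c l -> up_refutes (up_step l F) ->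
                 up_refutes F.

Definition AT nu (psi : cnf nu) (C : clause nu) : Prop :=
  up_refutes (psi ++ [seq [:: neg_lit l] | l <- C]).

Definition QRAT_on nu ulev elev (psi : cnf nu) (C : clause nu) (l : lit nu)
  : Prop :=
  l \in C /\
  forall D, D \in psi -> neg_lit l \in D ->
    AT psi ([seq k <- C | k != l] ++
            [seq k <- D | (k != neg_lit l) &&
                          (@lit_level nu ulev elev k <= @lit_level nu ulev elev l)]).

Definition QRAT_addable nu ulev elev (psi : cnf nu) (C : clause nu) : Prop :=
  AT psi C \/ exists l, @QRAT_on nu ulev elev psi C l.

(* Main.v *)
Require Import Defs.
From mathcomp Require Import all_boot.

Lemma undup_single (T : eqType) (s : seq T) (y : T) :
  y \in s -> (forall k, k \in s -> k = y) -> undup s == [:: y].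
Proof.
elim: s => [//|a s IH] ls eq /=.
have al : a = y by apply: eq; rewrite inE eqxx.
case: ifP => as'.
  apply: IH; first by rewrite -al.
  by move=> k ks; apply: eq; rewrite inE ks orbT.
case: s IH ls eq as' => [|b s] _ _ eq as'; first by rewrite al.
have bl : b = y by apply: eq; rewrite !inE eqxx orbT.
by rewrite inE bl -al eqxx in as'.
Qed.

Section Aux.
Variable nu : nat.
Implicit Types (F : cnf nu) (A L : seq (lit nu)) (l k : lit nu).

Lemma negK l : neg_lit (neg_lit l) = l.
Proof. by case: l => b v; rewrite /neg_lit /= negbK. Qed.

Lemma neg_neq l : neg_lit l != l.
Proof. by case: l => b v; rewrite /neg_lit xpair_eqE eqxx andbT; case: b. Qed.

Definition just F A l := exists2 c, c \in F &
  l \in c /\ forall k, k \in c -> k != l -> neg_lit k \in A.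

Fixpoint chainA F A L : Prop :=
  match L with
  | [::] => exists2 c, c \in F & forall k, k \in c -> neg_lit k \in A
  | l :: L' => if l \in A then chainA F A L' else just F A l /\ chainA F (l :: A) L'
  end.

Lemma conflict_ref F0 A F c :
  (forall k, k \in A -> neg_lit k \notin A) ->
  (forall c, c \in F0 -> ~~ has (fun k => k \in A) c ->
     [seq k <- c | neg_lit k \notin A] \in F) ->
  c \in F0 -> (forall k, k \in c -> neg_lit k \in A) -> up_refutes F.
Proof.
move=> cons sim cF call; apply: UPEmpty.
have <- : [seq k <- c | neg_lit k \notin A] = [::].
  by rewrite (eq_in_filter (a2 := pred0)) ?filter_pred0 // => k kc; rewrite /= call.
apply: sim => //; apply/hasPn => k kc; apply/negP => kA.
by have := cons k kA; rewrite call.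
Qed.

Lemma direct F0 L : forall A F,
  (forall k, k \in A -> neg_lit k \notin A) ->
  (forall c, c \in F0 -> ~~ has (fun k => k \in A) c ->
     [seq k <- c | neg_lit k \notin A] \in F) ->
  chainA F0 A L -> up_refutes F.
Proof.
elim: L => [|l L IH] A F cons sim /=.
  by case=> c cF call; apply: (@conflict_ref F0 A F c cons sim cF call).
case: ifP => lA; first by apply: IH.
case=> [[c cF [lc cj]] ch].
case nlA: (neg_lit l \in A).
  apply: (@conflict_ref F0 A F c cons sim cF) => k kc.
  by case: (eqVneq k l) => [->|kl] //; apply: cj.
have cons' : forall k, k \in l :: A -> neg_lit k \notin l :: A.
  move=> k; rewrite !inE => /orP [/eqP ->|kA].
    by rewrite nlA (negbTE (neg_neq l)).
  apply/negP => /orP [/eqP e|nkA].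
    by rewrite -e negK kA in nlA.
  by have := cons k kA; rewrite nkA.
have cu : ~~ has (fun k => k \in A) c.
  apply/hasPn => k kc; apply/negP => kA.
  case: (eqVneq k l) => [e|kl]; first by rewrite -e kA in lA.
  by have := cons k kA; rewrite cj.
have c'F := sim c cF cu.
apply: (UPStep c'F (l := l)).
  apply: undup_single; first by rewrite mem_filter nlA lc.
  move=> k; rewrite mem_filter => /andP [nkA kc].
  by apply/eqP; apply/negPn/negP => kl; rewrite cj in nkA.
apply: (IH (l :: A)) => // d dF dh.
have dA : ~~ has (fun k => k \in A) d.
  apply/hasPn => k kd; apply/negP => kA.
  by move/hasPn: dh => /(_ k kd); rewrite inE kA orbT.
have ld : l \notin d.
  apply/negP => ld; move/hasPn: dh => /(_ l ld); by rewrite inE eqxx.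
have -> : [seq k <- d | neg_lit k \notin l :: A] =
          [seq k <- [seq k <- d | neg_lit k \notin A] | k != neg_lit l].
  rewrite -filter_predI; apply: eq_filter => k /=.
  rewrite inE negb_or; congr (_ && _).
  apply/idP/idP => /eqP H; apply/eqP => H'; apply: H.
    by rewrite H' negK.
  by rewrite -H' negK.
rewrite /up_step; apply: (map_f (fun c => [seq k <- c | k != neg_lit l])).
by rewrite mem_filter (sim d dF dA) andbT mem_filter (negbTE ld) andbF.
Qed.

Lemma just_mono F A A' l : {subset A <= A'} -> just F A l -> just F A' l.
Proof. by move=> s [c cF [lc cj]]; exists c => //; split => // k kc kl; apply/s/cj. Qed.

Lemma chain_app F A P R :
  (forall l, l \in P -> just F A l) ->
  (forall A', {subset A <= A'} -> {subset P <= A'} -> chainA F A' R) ->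
  chainA F A (P ++ R).
Proof.
elim: P A => [|l P IH] A jP cont /=.
  by apply: cont.
case: ifP => lA.
  apply: IH => [k kP|A' s sP]; first by apply: jP; rewrite inE kP orbT.
  apply: cont => // k; rewrite inE => /orP [/eqP ->|]; [by apply: s|exact: sP].
split; first by apply: jP; rewrite inE eqxx.
apply: IH => [k kP|A' s sP].
  apply: (@just_mono F A (l :: A) k) => [x xA|]; first by rewrite inE xA orbT.
  by apply: jP; rewrite inE kP orbT.
apply: cont => [x xA|x]; first by apply: s; rewrite inE xA orbT.
rewrite inE => /orP [/eqP ->|]; [by apply: s; rewrite inE eqxx|exact: sP].
Qed.

End Aux.

Definition ev {nu} (v : var nu) : var nu :=
  match v with inr (x, _) => inr (x, None) | inl u => inl u end.

Theorem lemma2 (nu : nat) (ulev : 'I_nu -> nat) (elev : nat -> nat)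
  (psi : cnf nu) (C : clause nu) (sigma : annot nu) :
  C \in psi ->
  (forall l, l \in C -> annotated_lit ulev elev l) ->
  (forall l x tau, l \in C ++ inst ulev elev sigma C ->
     l.2 = @avar nu x tau -> has_def_clauses psi x tau) ->
  AT psi (inst ulev elev sigma C) /\
  QRAT_addable ulev elev psi (inst ulev elev sigma C).
Proof.
move=> Cpsi ann defs.
set C' := inst ulev elev sigma C.
set F := psi ++ [seq [:: neg_lit l] | l <- C'].
have inF c : c \in psi -> c \in F by move=> h; rewrite mem_cat h.
suff hAT : AT psi C' by split => //; left.
rewrite /AT -/F.
apply: (@direct _ F ([seq neg_lit l | l <- C'] ++
   ([seq (~~ l.1, ev l.2) | l <- C] ++ ([seq neg_lit l | l <- C] ++ [::]))) [::] F)
  => // [c cF _|].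
  by rewrite [X in X \in _](_ : _ = c) //; elim: (c) => //= a s ->.
apply: chain_app => [l /mapP [l' l'C ->]|A1 _ s1].
  exists [:: neg_lit l']; first by rewrite mem_cat map_f ?orbT.
  by split; [rewrite inE eqxx|move=> k; rewrite inE => ->].
apply: chain_app => [l2 /mapP [l lC ->]|A2 s12 s2].
  have [x [tau [e wf]]] := ann l lC.
  set tau' := annot_inst ulev elev x sigma tau.
  have l'C' : (l.1, avar x tau') \in C'.
    by rewrite /C' /inst; apply/mapP; exists l => //; rewrite e.
  have [d1 d2] : has_def_clauses psi x tau'.
    by apply: (defs (l.1, avar x tau')) => //; rewrite mem_cat l'C' orbT.
  have nl'A : neg_lit (l.1, avar x tau') \in A1 by apply: s1; rewrite map_f.
  rewrite e /=; case: l e lC l'C' nl'A => [[] v] e lC l'C' nl'A /=.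
    exists [:: (true, avar x tau'); (false, evar nu x)]; first exact: inF.
    split; first by rewrite !inE eqxx orbT.
    by move=> k; rewrite !inE => /orP [/eqP ->|/eqP ->] //; rewrite eqxx.
  exists [:: (false, avar x tau'); (true, evar nu x)]; first exact: inF.
  split; first by rewrite !inE eqxx orbT.
  by move=> k; rewrite !inE => /orP [/eqP ->|/eqP ->] //; rewrite eqxx.
apply: chain_app => [l3 /mapP [l lC ->]|A3 s23 s3].
  have [x [tau [e wf]]] := ann l lC.
  have [d1 d2] : has_def_clauses psi x tau.
    by apply: (defs l) => //; rewrite mem_cat lC.
  have evA : (~~ l.1, ev l.2) \in A2 by apply: s2; apply/mapP; exists l.
  case: l e lC evA => [[] v] /= e lC evA; subst v => /=.
    exists [:: (false, avar x tau); (true, evar nu x)]; first exact: inF.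
    split; first by rewrite /neg_lit !inE eqxx.
    by move=> k; rewrite !inE => /orP [/eqP ->|/eqP ->] //; rewrite eqxx.
  exists [:: (true, avar x tau); (false, evar nu x)]; first exact: inF.
  split; first by rewrite /neg_lit !inE eqxx.
  by move=> k; rewrite !inE => /orP [/eqP ->|/eqP ->] //; rewrite eqxx.
exists C; first exact: inF.
by move=> k kC; apply: s3; rewrite map_f.
Qed.
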